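(* Let $B(x)=\frac{x}{1+x^2}$, $B_0(x)=x$ and $B_j(x)=B(B_{j-1}(x))$ for $j\ge1$. For every $j\ge0$, the equation $B_j(x)=-1$ has exactly $2^j$ distinct roots in $\mathbb{C}$. *)

(* Defs.v *)
From mathcomp Require Import all_boot all_order all_algebra.
From mathcomp Require Import reals complex.
Set Implicit Arguments. Unset Strict Implicit. Unset Printing Implicit Defensive.
Import Order.TTheory GRing.Theory Num.Theory.
Local Open Scope ring_scope.

(* The rational map B(x) = x / (1 + x^2) on the complex numbers C = R[i],
   as a partial function: undefined at the poles x = +- i (where 1 + x^2 = 0). *)
Definition Bmap (R : realType) (x : R[i]) : option R[i] :=
  if 1 + x ^+ 2 == 0 then None else Some (x / (1 + x ^+ 2)).

Fixpoint Biter (R : realType) (j : nat) (x : R[i]) : option R[i] :=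
  match j with
  | 0 => Some x
  | j'.+1 => match Biter j' x with Some y => Bmap y | None => None end
  end.

(* Main.v *)
Require Import Defs.
From mathcomp Require Import all_boot all_order all_algebra.
From mathcomp Require Import reals complex.
From mathcomp Require Import ring lra.
Import GRing.Theory Num.Theory.
Local Open Scope ring_scope.

Section Helpers.
Variable R : realType.
Local Notation C := R[i].

Lemma BiterS j (x : C) : Biter j.+1 x = obind (Biter j) (Bmap x).
Proof.
elim: j x => [|j IH] x; first by rewrite /=; case: (Bmap x).
transitivity (obind (@Bmap R) (Biter j.+1 x)); first by [].
by rewrite IH; case: (Bmap x).
Qed.

Lemma Bmap_real (s : R) : Bmap (s%:C)%C = Some ((s / (1 + s ^+ 2))%:C)%C.
Proof.
rewrite /Bmap.
have -> : 1 + (s%:C)%C ^+ 2 = ((1 + s ^+ 2)%:C)%C by rewrite rmorphD rmorph1 rmorphXn.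
rewrite fmorph_eq0.
have hpos : 0 < 1 + s ^+ 2 by rewrite ltr_pwDl // sqr_ge0.
by rewrite (negbTE (lt0r_neq0 hpos)) fmorph_div.
Qed.

Lemma real_inv j (r : R) : - 2^-1 <= r <= 2^-1 ->
  exists s : R, Biter j (r%:C)%C = Some (s%:C)%C /\ - 2^-1 <= s <= 2^-1.
Proof.
move=> hr; elim: j => [|j [s [hs hb]]] /=; first by exists r.
rewrite hs Bmap_real; eexists; split; first reflexivity.
have hpos : 0 < 1 + s ^+ 2 by rewrite ltr_pwDl // sqr_ge0.
have h1 := sqr_ge0 (s - 1); have h2 := sqr_ge0 (s + 1).
apply/andP; split.
  by rewrite ler_pdivlMr //; nra.
by rewrite ler_pdivrMr //; nra.
Qed.


Definition disc (y : C) := sqrtc (1 - 4 * y ^+ 2).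
Definition roots2 (y : C) : seq C :=
  [:: (1 + disc y) / (2 * y); (1 - disc y) / (2 * y)].

Lemma Bmap_roots (y x : C) : y != 0 -> (Bmap x = Some y <-> x \in roots2 y).
Proof.
move=> y0; have hd : disc y ^+ 2 = 1 - 4 * y ^+ 2 by rewrite /disc sqr_sqrtc.
have y2 : 2 * y != 0 by rewrite mulf_neq0 // pnatr_eq0.
have y4 : 4 * y != 0 by rewrite mulf_neq0 // pnatr_eq0.
have back : forall x, (2 * y * x - 1) ^+ 2 = 1 - 4 * y ^+ 2 -> Bmap x = Some y.
  move=> z hz.
  have q : y * (1 + z ^+ 2) = z.
    have : 4 * y * (y * (1 + z ^+ 2) - z) = (2 * y * z - 1) ^+ 2 - (1 - 4 * y ^+ 2).
      by ring.
    by rewrite hz subrr => /eqP; rewrite mulf_eq0 (negbTE y4) subr_eq0 => /eqP.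
  rewrite /Bmap; case: ifP => [/eqP h|h].
    have z0 : z = 0 by rewrite -q h mulr0.
    by move: h; rewrite z0 expr0n /= addr0 => /eqP; rewrite oner_eq0.
  by congr Some; rewrite -{1}q mulfK // (negbT h).
rewrite !inE; split.
- rewrite /Bmap; case: ifP => // h0 [hx].
  have ex : x = y * (1 + x ^+ 2) by rewrite -hx divfK // (negbT h0).
  have e2 : (2 * y * x - 1) ^+ 2 = 1 - 4 * y ^+ 2 + 4 * y * (y * (1 + x ^+ 2) - x).
    by ring.
  have : (2 * y * x - 1) ^+ 2 == disc y ^+ 2 by rewrite e2 -ex subrr mulr0 addr0 hd.
  rewrite eqf_sqr => /orP [] /eqP h; apply/orP; [left|right]; apply/eqP.
    by rewrite -h; field.
  by rewrite -[disc y]opprK -h; field.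
- have h1 : 2 * y * ((1 + disc y) / (2 * y)) - 1 = disc y by field.
  have h2 : 2 * y * ((1 - disc y) / (2 * y)) - 1 = - disc y by field.
  case/orP => /eqP ->; apply: back; rewrite -hd ?h1 ?h2 //.
  by rewrite sqrrN.
Qed.

Lemma roots2_uniq (y : C) : y != 0 -> 1 - 4 * y ^+ 2 != 0 -> uniq (roots2 y).
Proof.
move=> y0 hd; rewrite /roots2 /= inE andbT.
apply/negP => /eqP h.
have : disc y = 0.
  have y2 : 2 * y != 0 by rewrite mulf_neq0 // pnatr_eq0.
  have := congr1 (fun t => t * (2 * y)) h; rewrite /= !divfK // => /addrI e.
  have : 2 * disc y = 0 by rewrite mulr2n mulrDl mul1r {1}e addNr.
  by move/eqP; rewrite mulf_eq0 pnatr_eq0 /= => /eqP.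
move/(congr1 (fun t => t ^+ 2)); rewrite /disc sqr_sqrtc expr0n /= => /eqP.
by rewrite (negbTE hd).
Qed.


Lemma not_real j (r : R) : - 2^-1 <= r <= 2^-1 -> Biter j (r%:C)%C <> Some (-1).
Proof.
move=> hr; have [s [-> hs]] := real_inv j r hr => -[] e.
have : s = -1 by apply: (@complexI R); rewrite e rmorphN1.
by move=> es; move: hs; rewrite es => /andP [h _]; lra.
Qed.

Lemma good j (y : C) : Biter j y = Some (-1) -> y != 0 /\ 1 - 4 * y ^+ 2 != 0.
Proof.
move=> hy; split.
  apply/negP => /eqP y0; apply: (@not_real j 0); last by rewrite rmorph0 -y0.
  apply/andP; split; lra.
apply/negP => /eqP h.
have : (2 * y) ^+ 2 == 1 by apply/eqP; rewrite -[RHS]subr0 -h; ring.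
have i2 : (2 : C) != 0 by rewrite pnatr_eq0.
have yE : y = 2^-1 * (2 * y) by rewrite mulKf.
rewrite sqrf_eq1 => /orP [] /eqP e.
  have e' : y = 2^-1 by rewrite yE e mulr1.
  apply: (@not_real j (2^-1)); last by rewrite fmorphV rmorph_nat -e'.
  apply/andP; split; last by [].
  lra.
have e' : y = - 2^-1 by rewrite yE e mulrN1.
apply: (@not_real j (- 2^-1)); last by rewrite rmorphN fmorphV rmorph_nat -e'.
apply/andP; split; lra.
Qed.

Lemma flat_uniq (T U : eqType) (f : T -> seq U) (g : U -> T) (s : seq T) :
  uniq s -> (forall y, y \in s -> uniq (f y)) ->
  (forall y x, y \in s -> x \in f y -> g x = y) -> uniq (flatten (map f s)).
Proof.
elim: s => //= y s IH /andP [ys us] hu hg.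
rewrite cat_uniq hu ?mem_head //= IH //; last first.
- by move=> y' x ys' xf; apply: hg => //; rewrite in_cons ys' orbT.
- by move=> y' ys'; apply: hu; rewrite in_cons ys' orbT.
rewrite andbT; apply/hasPn => x /flattenP [l /mapP [y' y's ->] xl].
apply/negP => xy.
have e1 := hg y x (mem_head _ _) xy.
have e2 : g x = y' by apply: hg => //; rewrite in_cons y's orbT.
by move: ys; rewrite -e1 e2 y's.
Qed.

Lemma size_flat (s : seq C) : size (flatten (map roots2 s)) = (2 * size s)%N.
Proof. by elim: s => //= y s ->; rewrite mulnS. Qed.

End Helpers.
Arguments good {R j y}.
Arguments Bmap_roots {R y x}.
Arguments roots2_uniq {R y}.
Arguments size_flat {R}.
Arguments BiterS {R}.

Theorem proposition2p8 (R : realType) (j : nat) :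
  exists s : seq R[i],
    [/\ uniq s, size s = (2 ^ j)%N &
        forall x : R[i], x \in s <-> Biter j x = Some (-1)].
Proof.
elim: j => [|j [s [us ss hs]]].
  exists [:: -1]; split => // x; rewrite inE; split => [/eqP -> //|[->]].
  by rewrite eqxx.
exists (flatten (map (@roots2 R) s)); split.
- apply: (@flat_uniq _ _ _ (fun x => odflt 0 (Bmap x))) => //.
    by move=> y /hs /good [y0 d0]; apply: roots2_uniq.
  move=> y x /hs /good [y0 _] /(Bmap_roots y0) -> //.
- by rewrite size_flat ss expnS.
move=> x; rewrite BiterS; split.
  case/flattenP => l /mapP [y ys ->] xl.
  have [y0 _] := good (proj1 (hs y) ys).
  by move/(Bmap_roots y0): xl => ->; rewrite /=; apply/hs.
case E: (Bmap x) => [y|] //= hy.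
have ys : y \in s by apply/hs.
have [y0 _] := good hy.
apply/flattenP; exists (roots2 R y); first exact: (map_f (@roots2 R) ys).
by apply/(Bmap_roots y0).
Qed.
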